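(* Let $A_1,\dots,A_n:\mathbb{R}^d\rightrightarrows\mathbb{R}^d$ be maximal monotone and $B:\mathbb{R}^d\to\mathbb{R}^d$ monotone and Lipschitz continuous. Let $(z^k)\subset\mathbb{R}^d$, $(w_1^k,\dots,w_{n+1}^k)\subset\mathbb{R}^{(n+1)d}$ and $(x_i^k,y_i^k)_{i=1}^{n+1}\subset\mathbb{R}^{2(n+1)d}$ be deterministic sequences such that $y_i^k\in A_i(x_i^k)$ for $i=1,\dots,n$, $\sum_{i=1}^{n+1}w_i^k=0$ for all $k$, $$\xi_1\sum_{i=1}^n\|y_i^k-w_i^k\|^2+\xi_2\sum_{i=1}^n\|z^k-x_i^k\|^2+\xi_3\|B(z^k)-w_{n+1}^k\|^2\to0$$ for some scalars $\xi_1,\xi_2,\xi_3>0$, and $p^k:=(z^k,w_1^k,\dots,w_{n+1}^k)\to\hat p:=(\hat z,\hat w_1,\dots,\hat w_{n+1})$. Then $\hat p\in\mathcal{S}$.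
   Context: $\mathcal{S}=\{(z,w_1,\dots,w_{n+1})\in\mathbb{R}^{(n+2)d}: w_i\in A_i(z)\ \forall i=1,\dots,n,\ w_{n+1}=B(z),\ \sum_{i=1}^{n+1}w_i=0\}$. *)

(* Defs.v *)
From HB Require Import structures.
From mathcomp Require Import all_boot all_order all_algebra.
From mathcomp Require Import all_classical all_reals all_analysis.
Set Implicit Arguments. Unset Strict Implicit. Unset Printing Implicit Defensive.
Import Order.TTheory GRing.Theory Num.Theory.
Import numFieldNormedType.Exports.
Local Open Scope classical_set_scope.
Local Open Scope ring_scope.

Definition dotp (R : realType) (d : nat) (u v : 'rV[R]_d) : R :=
  \sum_(j < d) u ord0 j * v ord0 j.
Definition enorm (R : realType) (d : nat) (u : 'rV[R]_d) : R :=
  Num.sqrt (dotp u u).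

Definition monotone_op (R : realType) (d : nat) (A : 'rV[R]_d -> set 'rV[R]_d) :=
  forall x y u v, A x u -> A y v -> 0 <= dotp (x - y) (u - v).

Definition maximal_monotone (R : realType) (d : nat) (A : 'rV[R]_d -> set 'rV[R]_d) :=
  monotone_op A /\
  forall A' : 'rV[R]_d -> set 'rV[R]_d, monotone_op A' ->
    (forall x u, A x u -> A' x u) -> forall x u, A' x u -> A x u.

Definition monotone_fun (R : realType) (d : nat) (B : 'rV[R]_d -> 'rV[R]_d) :=
  forall x y, 0 <= dotp (x - y) (B x - B y).

Definition lipschitz_fun (R : realType) (d : nat) (B : 'rV[R]_d -> 'rV[R]_d) :=
  exists L : R, forall x y, enorm (B x - B y) <= L * enorm (x - y).

(* The solution set S. Indices: w : 'I_n.+1 -> R^d, where w (widen i) for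
   i : 'I_n is w_{i+1} and w ord_max is w_{n+1}. *)
Definition solS (R : realType) (d n : nat) (A : 'I_n -> 'rV[R]_d -> set 'rV[R]_d)
  (B : 'rV[R]_d -> 'rV[R]_d) (z : 'rV[R]_d) (w : 'I_n.+1 -> 'rV[R]_d) : Prop :=
  (forall i : 'I_n, A i z (w (widen_ord (leqnSn n) i))) /\
  w ord_max = B z /\
  \sum_(i < n.+1) w i = 0.

(* Main.v *)
Require Import Defs.
From HB Require Import structures.
From mathcomp Require Import all_boot all_order all_algebra.
From mathcomp Require Import all_classical all_reals all_analysis.
From mathcomp Require Import lra.
Import Order.TTheory GRing.Theory Num.Theory.
Import numFieldNormedType.Exports.
Local Open Scope classical_set_scope.
Local Open Scope ring_scope.

Set Implicit Arguments.
Section H.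
Variables (R : realType) (d : nat).
Implicit Types (M a b : 'rV[R]_d).

Lemma entry_le M j : `|M ord0 j| <= `|M|.
Proof.
have -> : `|M| = mx_norm M by []; rewrite mx_normrE.
exact: (le_bigmax _ (fun ij : 'I_1 * 'I_d => `|M ij.1 ij.2|) (ord0, j)).
Qed.

Lemma norm_le_enorm M : `|M| <= enorm M.
Proof.
have -> : `|M| = mx_norm M by []; rewrite mx_normrE. apply: bigmax_le => //=.
  by rewrite /enorm sqrtr_ge0.
move=> [i j] _ /=; rewrite (ord1 i).
rewrite -sqrtr_sqr /enorm ler_sqrt; last first.
  by apply: sumr_ge0 => k _; rewrite -expr2 sqr_ge0.
rewrite /dotp (bigD1 j) //= -expr2 lerDl.
by apply: sumr_ge0 => k _; rewrite -expr2 sqr_ge0.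
Qed.

Lemma dotp_ge0 M : 0 <= dotp M M.
Proof. by apply: sumr_ge0 => k _; rewrite -expr2 sqr_ge0. Qed.

Lemma dotpNN a b : dotp (- a) (- b) = dotp a b.
Proof. by apply: eq_bigr => j _; rewrite !mxE mulrNN. Qed.

Lemma enorm_sq M : enorm M ^+ 2 = dotp M M.
Proof. by rewrite /enorm sqr_sqrtr // dotp_ge0. Qed.

Lemma cvg_entry (u : nat -> 'rV[R]_d) M j :
  u @ \oo --> M -> (fun k => u k ord0 j) @ \oo --> M ord0 j.
Proof.
move=> /cvgrPdist_lt h; apply/cvgrPdist_lt => e e0.
apply: filterS (h e e0) => k; apply: le_lt_trans.
by have := entry_le (M - u k) j; rewrite !mxE.
Qed.

Lemma cvg_dotp (u v : nat -> 'rV[R]_d) a b :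
  u @ \oo --> a -> v @ \oo --> b ->
  (fun k => dotp (u k) (v k)) @ \oo --> dotp a b.
Proof.
move=> ua vb; rewrite /dotp.
apply: (@cvg_big R^o _ +%R 0 xpredT add_continuous) => // j _.
by apply: cvgM; apply: cvg_entry.
Qed.

Lemma sq_cvg0 (u : nat -> 'rV[R]_d) (g : nat -> R) :
  g @ \oo --> 0 -> (forall k, enorm (u k) ^+ 2 <= g k) -> u @ \oo --> (0 : 'rV[R]_d).
Proof.
move=> /cvgrPdist_lt hg hu; apply/cvgrPdist_lt => e e0.
have e20 : 0 < e ^+ 2 by rewrite exprn_gt0.
apply: filterS (hg _ e20) => k; rewrite !sub0r !normrN => gk.
have h1 := norm_le_enorm (u k).
have h2 := hu k.
have h3 : 0 <= enorm (u k) by rewrite /enorm sqrtr_ge0.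
have h4 : g k <= `|g k| by exact: ler_norm.
apply: le_lt_trans h1 _.
nra.
Qed.
End H.
Unset Implicit Arguments.

Lemma dotp00 (R : realType) (d : nat) : dotp (0 : 'rV[R]_d) 0 = 0.
Proof. by apply: big1 => j _; rewrite mxE mul0r. Qed.

Lemma le_sum_term (R : realType) m (f : 'I_m -> R) i :
  (forall j, 0 <= f j) -> f i <= \sum_j f j.
Proof.
move=> h; rewrite (bigD1 i) //= lerDl; exact: sumr_ge0.
Qed.

Theorem lemma4 (R : realType) (d n : nat)
  (A : 'I_n -> 'rV[R]_d -> set 'rV[R]_d) (B : 'rV[R]_d -> 'rV[R]_d)
  (hA : forall i, maximal_monotone (A i))
  (hBm : monotone_fun B) (hBl : lipschitz_fun B)
  (z : nat -> 'rV[R]_d) (w x y : nat -> 'I_n.+1 -> 'rV[R]_d)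
  (xi1 xi2 xi3 : R) (zhat : 'rV[R]_d) (what : 'I_n.+1 -> 'rV[R]_d) :
  0 < xi1 -> 0 < xi2 -> 0 < xi3 ->
  (forall k (i : 'I_n),
     A i (x k (widen_ord (leqnSn n) i)) (y k (widen_ord (leqnSn n) i))) ->
  (forall k, \sum_(i < n.+1) w k i = 0) ->
  (fun k => xi1 * (\sum_(i < n) enorm (y k (widen_ord (leqnSn n) i)
                                       - w k (widen_ord (leqnSn n) i)) ^+ 2)
          + xi2 * (\sum_(i < n) enorm (z k - x k (widen_ord (leqnSn n) i)) ^+ 2)
          + xi3 * enorm (B (z k) - w k ord_max) ^+ 2) @ \oo --> (0 : R) ->
  z @ \oo --> zhat ->
  (forall i, (fun k => w k i) @ \oo --> what i) ->
  solS A B zhat what.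
Proof.
move=> x1 x2 x3 hxy hsum hF hz hw.
set F := (fun k => _) in hF.
have cF : forall c, (fun k => F k * c) @ \oo --> (0 : R).
  move=> c; rewrite -(mul0r c); apply: cvgM => //; exact: cvg_cst.
have S1 : forall k, 0 <= \sum_(i < n) enorm (y k (widen_ord (leqnSn n) i)
                                       - w k (widen_ord (leqnSn n) i)) ^+ 2.
  by move=> k; apply: sumr_ge0 => i _; rewrite sqr_ge0.
have S2 : forall k, 0 <= \sum_(i < n) enorm (z k - x k (widen_ord (leqnSn n) i)) ^+ 2.
  by move=> k; apply: sumr_ge0 => i _; rewrite sqr_ge0.
have S3 : forall k, 0 <= enorm (B (z k) - w k ord_max) ^+ 2.
  by move=> k; rewrite sqr_ge0.
have v3 : (fun k => B (z k) - w k ord_max) @ \oo --> (0 : 'rV[R]_d).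
  apply: (@sq_cvg0 _ _ _ _ (cF xi3^-1)) => k; rewrite ler_pdivlMr // /F.
  have := S1 k; have := S2 k; have := S3 k.
  have := x1; have := x2; nra.
have Bz : (fun k => B (z k)) @ \oo --> B zhat.
  case: hBl => L hL.
  apply/subr_cvg0.
  have g0 : (fun k => L ^+ 2 * dotp (z k - zhat) (z k - zhat)) @ \oo --> (0 : R).
    rewrite -(mulr0 (L ^+ 2)); apply: cvgM; first exact: cvg_cst.
    rewrite -(dotp00 R d) -(subrr zhat).
    by apply: cvg_dotp; apply: cvgB => //; exact: cvg_cst.
  apply: (@sq_cvg0 _ _ _ _ g0) => k.
  rewrite -enorm_sq.
  have := hL (z k) zhat.
  have : 0 <= enorm (B (z k) - B zhat) by rewrite /enorm sqrtr_ge0.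
  have : 0 <= enorm (z k - zhat) by rewrite /enorm sqrtr_ge0.
  nra.
have wmax : what ord_max = B zhat.
  apply: (norm_cvg_unique (hw ord_max)).
  have e : (fun k => w k ord_max) = (fun k => B (z k) - (B (z k) - w k ord_max)).
    by apply: funext => k; rewrite opprB addrC subrK.
  rewrite /= e -[B zhat]subr0; exact: cvgB Bz v3.
split; last split => //.
- move=> i.
  set i' := widen_ord (leqnSn n) i.
  have hx : (fun k => x k i') @ \oo --> zhat.
    have v : (fun k => z k - x k i') @ \oo --> (0 : 'rV[R]_d).
      apply: (@sq_cvg0 _ _ _ _ (cF xi2^-1)) => k; rewrite ler_pdivlMr // /F.
      have := @le_sum_term _ _ (fun i => enorm (z k - x k (widen_ord (leqnSn n) i)) ^+ 2
         ) i (fun j => sqr_ge0 _).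
      have := S1 k; have := S2 k; have := S3 k.
      have := x1; have := x2; rewrite -/i'; nra.
    have e : (fun k => x k i') = (fun k => z k - (z k - x k i')).
      by apply: funext => k; rewrite opprB addrC subrK.
    rewrite e -[zhat]subr0; exact: cvgB hz v.
  have hy : (fun k => y k i') @ \oo --> what i'.
    have v : (fun k => y k i' - w k i') @ \oo --> (0 : 'rV[R]_d).
      apply: (@sq_cvg0 _ _ _ _ (cF xi1^-1)) => k; rewrite ler_pdivlMr // /F.
      have := @le_sum_term _ _ (fun i => enorm (y k (widen_ord (leqnSn n) i)
                                       - w k (widen_ord (leqnSn n) i)) ^+ 2)
         i (fun j => sqr_ge0 _).
      have := S1 k; have := S2 k; have := S3 k.
      have := x1; have := x3; rewrite -/i'; nra.
    have e : (fun k => y k i') = (fun k => (y k i' - w k i') + w k i').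
      by apply: funext => k; rewrite subrK.
    rewrite e -[what i']add0r; exact: cvgD v (hw i').
  have lim0 : forall a u, A i a u -> 0 <= dotp (a - zhat) (u - what i').
    move=> a u hau.
    apply: (@cvgr_to_ge nat \oo _ R (fun k => dotp (a - x k i') (u - y k i'))).
    - by apply: cvg_dotp; apply: cvgB => //; exact: cvg_cst.
    - by near=> k; case: (hA i) => mon _; apply: mon.
  case: (hA i) => mon max.
  apply: (max (fun a u => A i a u \/ (a = zhat /\ u = what i'))); last by right.
  + move=> a b u v [h1|[-> ->]] [h2|[-> ->]].
    * exact: mon.
    * exact: lim0.
    * by rewrite -dotpNN !opprB; exact: lim0.
    * by rewrite !subrr dotp00.
  + by move=> a u h; left.
- have h : (fun k => \sum_(i < n.+1) w k i) @ \oo --> \sum_(i < n.+1) what i.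
    by apply: (@cvg_big 'rV[R]_d _ +%R 0 xpredT add_continuous) => // i _; exact: hw.
  apply: (norm_cvg_unique h).
  have e : (fun k => \sum_(i < n.+1) w k i) = (fun _ => 0) by apply: funext => k; exact: hsum.
  by rewrite /= e; exact: cvg_cst.
Unshelve. all: by end_near.
Qed.
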